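(* Let $X$ be a $k$-regular graph on $n$ vertices which may have loops (no multiple edges), where each loop contributes $1$ to the degree, and let $\tau$ be the least eigenvalue of its adjacency matrix $A$; assume $k>\tau$ (i.e. $A$ is not a scalar matrix). For any independent set $S$ of size $s$ containing $s_1$ vertices with loops, \[ s\le n\,\frac{-\tau+\sqrt{\tau^2+4s_1\frac{k-\tau}{n}}}{2(k-\tau)}. \]
   Context: The adjacency matrix has $A_{ii}=1$ if vertex $i$ carries a loop and $0$ otherwise, and $A_{ij}=1$ for adjacent distinct $i,j$. An independent set is a set of vertices no two distinct members of which are adjacent; looped vertices may belong to it. *)

(* Defs.v *)
From HB Require Import structures.
From mathcomp Require Import all_boot all_order all_algebra.
Set Implicit Arguments. Unset Strict Implicit. Unset Printing Implicit Defensive.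
Import Order.TTheory GRing.Theory Num.Theory.
Local Open Scope ring_scope.

(* A graph on vertex set 'I_n possibly with loops, no multiple edges:
   a symmetric relation adj; adj x x means x carries a loop. *)
Definition symmetric_graph (n : nat) (adj : rel 'I_n) : Prop :=
  forall x y, adj x y = adj y x.

Definition regular_graph (n : nat) (adj : rel 'I_n) (k : nat) : Prop :=
  forall x, #|[set y | adj x y]| = k.

Definition adjmx (R : nzRingType) (n : nat) (adj : rel 'I_n) : 'M[R]_n :=
  \matrix_(i, j) (adj i j)%:R.

Definition least_eigenvalue (R : realFieldType) (n : nat) (A : 'M[R]_n) (t : R) : Prop :=
  eigenvalue A t /\ (forall a, eigenvalue A a -> t <= a).

Definition independent_set (n : nat) (adj : rel 'I_n) (S : {set 'I_n}) : Prop :=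
  forall x y, x \in S -> y \in S -> x != y -> ~~ adj x y.

(* Main.v *)
Require Import Defs.
From HB Require Import structures.
From mathcomp Require Import all_boot all_order all_algebra.
From mathcomp Require Import complex ring lra.
Import Order.TTheory GRing.Theory Num.Theory.
Local Open Scope ring_scope.

Section PSD.
Variable R : rcfType.
Local Notation C := (R[i]).
Local Notation toC := (real_complex R).

Lemma toC_real (r : R) : toC r \is Num.real.
Proof. by apply/complex_realP; exists r. Qed.

Lemma toC_conj (r : R) : ((toC r)^*)%R = toC r.
Proof. exact: conj_Creal (toC_real r). Qed.

Lemma psd n (A : 'M[R]_n) (tau : R) : A^T = A ->
  (forall a, eigenvalue A a -> tau <= a) ->
  forall x : 'rV[R]_n, tau * (x *m x^T) 0 0 <= (x *m A *m x^T) 0 0.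
Proof.
move=> Asym Htau x.
pose Ac := map_mx toC A.
have Aherm : Ac \is hermsymmx.
  apply/is_hermitianmxP; rewrite expr0 scale1r.
  apply/matrixP=> i j; rewrite !mxE toC_conj.
  by rewrite -[A in RHS]Asym mxE.
set P := spectralmx Ac; set d := spectral_diag Ac.
have HA : Ac = invmx P *m diag_mx d *m P.
  exact/orthomx_spectralP/hermitian_normalmx.
have Pu : P \is unitarymx by exact: spectral_unitarymx.
have Punit : P \in unitmx by exact: spectral_unit.
have dreal := hermitian_spectral_diag_real Aherm.
have Hd : forall j, toC tau <= d 0 j.
  move=> j.
  have dj : d 0 j \is Num.real by exact: (mxOverP dreal).
  rewrite -(RRe_real dj) lecR; apply: Htau.
  rewrite eigenvalue_root_char -(fmorph_root toC) map_char_poly.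
  have E : toC (complex.Re (d 0 j)) = d 0 j by exact: RRe_real.
  change (root (char_poly Ac) (toC (complex.Re (d 0 j)))).
  rewrite E -eigenvalue_root_char.
  apply/eigenvalueP; exists (row j P).
    rewrite -row_mul HA !mulmxA mulmxV // mul1mx mul_diag_mx.
    by apply/rowP=> k; rewrite !mxE.
  apply/negP=> /eqP H0.
  have : row j (P *m invmx P) = 0 by rewrite row_mul H0 mul0mx.
  rewrite mulmxV // => /rowP /(_ j); rewrite !mxE eqxx /=.
  by move/eqP; rewrite oner_eq0.
rewrite -lecR.
set xc := map_mx toC x.
have -> : toC ((x *m A *m x^T) 0 0) = (xc *m Ac *m xc^T) 0 0.
  by rewrite /xc /Ac map_trmx -!map_mxM [in RHS]mxE.
have -> : toC (tau * (x *m x^T) 0 0) = toC tau * (xc *m xc^T) 0 0.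
  by rewrite /xc map_trmx -map_mxM [in RHS]mxE rmorphM.
have xcT : xc^T = (xc ^t* )%sesqui.
  by apply/matrixP=> i j; rewrite !mxE toC_conj.
have PtP : ((P ^t* )%sesqui) *m P = 1%:M by rewrite -invmx_unitary // mulVmx.
set y := xc *m (P ^t* )%sesqui.
have yt : (y ^t* )%sesqui = P *m (xc ^t* )%sesqui.
  by rewrite /y trmx_mul map_mxM trmxCK.
have E1 : xc *m xc^T = y *m (y ^t* )%sesqui.
  by rewrite xcT yt /y mulmxA -[_ *m P]mulmxA PtP mulmx1.
have E2 : xc *m Ac *m xc^T = y *m diag_mx d *m (y ^t* )%sesqui.
  by rewrite xcT yt HA invmx_unitary // /y !mulmxA.
rewrite E1 E2; clearbody y; rewrite -subr_ge0 !mxE mulr_sumr -sumrB; apply: sumr_ge0 => j _.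
rewrite mul_mx_diag !mxE.
have -> : y 0 j * d 0 j * (y 0 j)^* - toC tau * (y 0 j * (y 0 j)^* ) =
   (d 0 j - toC tau) * (y 0 j * (y 0 j)^* ) by ring.
by apply: mulr_ge0; [rewrite subr_ge0 | exact: mul_conjC_ge0].
Qed.

Lemma sum_ind n (P : pred 'I_n) : \sum_i ((P i)%:R : R) = #|P|%:R.
Proof.
rewrite -sum1_card natr_sum [RHS]big_mkcond /=; apply: eq_bigr => i _.
by rewrite unfold_in; case: (P i).
Qed.

Lemma dsum_lin n (a b c e : R) (f g h l : 'I_n -> 'I_n -> R) :
  \sum_i \sum_j (a * f i j + b * g i j + c * h i j + e * l i j) =
  a * (\sum_i \sum_j f i j) + b * (\sum_i \sum_j g i j)
  + c * (\sum_i \sum_j h i j) + e * (\sum_i \sum_j l i j).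
Proof.
under eq_bigr => i _ do rewrite !big_split /= -!mulr_sumr.
by rewrite !big_split /= -!mulr_sumr.
Qed.

End PSD.
Arguments sum_ind {R n}.
Arguments dsum_lin {R n}.
Arguments psd {R n}.

Theorem corollary3p3 (R : rcfType) (n k : nat) (adj : rel 'I_n) (tau : R)
  (S : {set 'I_n}) :
  symmetric_graph adj ->
  regular_graph adj k ->
  least_eigenvalue (adjmx R adj) tau ->
  tau < k%:R ->
  independent_set adj S ->
  let s := #|S| in
  let s1 := #|[set x in S | adj x x]| in
  s%:R <= n%:R * (- tau + Num.sqrt (tau ^+ 2 + 4 * s1%:R * (k%:R - tau) / n%:R))
            / (2 * (k%:R - tau)).
Proof.
move=> Hsym Hreg [_ Hleast] Hkt Hind.
rewrite /is_true; cbv zeta; fold (is_true (#|S|%:R <= n%:R * (- tau + Num.sqrt (tau ^+ 2 + 4 * #|[set x in S | adj x x]|%:R * (k%:R - tau) / n%:R)) / (2 * (k%:R - tau)))).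
set s := #|S|. set s1 := #|[set x in S | adj x x]|.
pose A := adjmx R adj.
have Asym : A^T = A by apply/matrixP=> i j; rewrite !mxE Hsym.
have Hpsd := psd A tau Asym Hleast.
have sn : (s <= n)%N by rewrite /s -[X in (_ <= X)%N]card_ord; exact: max_card.
have [n0|npos] := posnP n.
  have -> : (n%:R : R) = 0 by rewrite n0.
  have -> : s = 0%N by move: sn; rewrite n0; case: (s).
  by rewrite !mul0r.
pose v i := (((i \in S) : nat)%:R : R).
pose a i j := (((adj i j) : nat)%:R : R).
have hv : \sum_i v i = s%:R.
  rewrite (sum_ind [pred i | i \in S]); congr (_%:R); exact: eq_card.
have hrow : forall i, \sum_j a i j = k%:R.
  move=> i; rewrite (sum_ind (adj i)) -(Hreg i); congr (_%:R).
  by apply: eq_card => y; rewrite inE.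
have hcol : forall j, \sum_i a i j = k%:R.
  by move=> j; rewrite -(hrow j); apply: eq_bigr => i _; rewrite /a Hsym.
have hvav : \sum_i \sum_j v i * a i j * v j = s1%:R.
  have -> : s1%:R = \sum_i (((i \in S) && adj i i : nat)%:R : R).
    rewrite (sum_ind [pred i | (i \in S) && adj i i]); congr (_%:R).
    by apply: eq_card => y; rewrite !inE.
  apply: eq_bigr => i _; rewrite (bigD1 i) //= big1 ?addr0.
    by rewrite /v /a; case: (i \in S); case: (adj i i); rewrite /= ?mulr1 ?mul1r ?mulr0 ?mul0r.
  move=> j ji; rewrite /v /a.
  case iS: (i \in S); case jS: (j \in S); rewrite ?mulr0 ?mul0r //.
  have nij : i != j by rewrite eq_sym.
  by rewrite (negbTE (Hind i j iS jS nij)) /= mulr0 mul0r.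
have hva : \sum_i \sum_j v i * a i j = k%:R * s%:R.
  under eq_bigr do rewrite -mulr_sumr hrow mulrC.
  by rewrite -mulr_sumr hv.
have hav : \sum_i \sum_j a i j * v j = k%:R * s%:R.
  rewrite exchange_big /=.
  under eq_bigr do rewrite -mulr_suml hcol mulrC.
  by rewrite -mulr_suml hv mulrC.
have haa : \sum_i \sum_j a i j = n%:R * k%:R.
  under eq_bigr do rewrite hrow.
  by rewrite sumr_const card_ord mulr_natl.
have hvv : \sum_i v i * v i = s%:R.
  by rewrite -hv; apply: eq_bigr => i _; rewrite /v; case: (i \in S); rewrite ?mulr1 ?mulr0.
pose x : 'rV[R]_n := \row_i (n%:R * v i - s%:R).
have Hx := Hpsd x.
have q1 : (x *m x^T) 0 0 = n%:R * s%:R * (n%:R - s%:R).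
  rewrite mxE.
  under eq_bigr do rewrite !mxE.
  have -> : \sum_j (n%:R * v j - s%:R) * (n%:R * v j - s%:R) =
     \sum_j (n%:R * n%:R * (v j * v j) - 2 * n%:R * s%:R * v j + s%:R * s%:R).
    by apply: eq_bigr => j _; ring.
  rewrite !big_split /= sumrN -!mulr_sumr hvv hv sumr_const card_ord -mulr_natl.
  rewrite -mulr_natl; ring.
have q2 : (x *m A *m x^T) 0 0 = n%:R * n%:R * s1%:R - n%:R * k%:R * s%:R * s%:R.
  rewrite mxE.
  under eq_bigr do rewrite !mxE mulr_suml.
  rewrite exchange_big /=.
  have -> : \sum_i \sum_j x 0 i * A i j * (n%:R * v j - s%:R) =
     \sum_i \sum_j (n%:R * n%:R * (v i * a i j * v j) + (- (n%:R * s%:R)) * (v i * a i j)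
        + (- (n%:R * s%:R)) * (a i j * v j) + s%:R * s%:R * a i j).
    apply: eq_bigr => i _; apply: eq_bigr => j _; rewrite /x /A !mxE /a /v; ring.
  rewrite dsum_lin hvav hva hav haa; ring.
rewrite q1 q2 in Hx.
have Npos : (0 : R) < n%:R by rewrite ltr0n.
have apos : 0 < k%:R - tau by rewrite subr_gt0.
have S1ge0 : (0 : R) <= s1%:R by rewrite ler0n.
have Svge0 : (0 : R) <= s%:R by rewrite ler0n.
have H : 0 <= n%:R * s1%:R - (k%:R - tau) * s%:R ^+ 2 - tau * n%:R * s%:R.
  rewrite -(pmulr_rge0 _ Npos).
  have -> : n%:R * (n%:R * s1%:R - (k%:R - tau) * s%:R ^+ 2 - tau * n%:R * s%:R) =
    n%:R * n%:R * s1%:R - n%:R * k%:R * s%:R * s%:R - tau * (n%:R * s%:R * (n%:R - s%:R)) by ring.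
  by rewrite subr_ge0.
set q := Num.sqrt _.
have qge0 : 0 <= q by rewrite /q sqrtr_ge0.
have arg0 : 0 <= tau ^+ 2 + 4 * s1%:R * (k%:R - tau) / n%:R.
  apply: addr_ge0; first exact: sqr_ge0.
  apply: divr_ge0; last exact: ltW.
  by apply: mulr_ge0; [apply: mulr_ge0 => // | exact: ltW].
have q2e : n%:R * q ^+ 2 = n%:R * tau ^+ 2 + 4 * s1%:R * (k%:R - tau).
  rewrite /q sqr_sqrtr // mulrDr; congr (_ + _).
  by rewrite mulrC divfK // lt0r_neq0.
rewrite ler_pdivlMr; last by rewrite mulr_gt0.
set z := s%:R * (2 * (k%:R - tau)) + n%:R * tau.
have zsq : z ^+ 2 <= (n%:R * q) ^+ 2.
  have -> : (n%:R * q) ^+ 2 = n%:R * (n%:R * q ^+ 2) by ring.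
  rewrite q2e /z.
  rewrite -subr_ge0.
  have -> : n%:R * (n%:R * tau ^+ 2 + 4 * s1%:R * (k%:R - tau)) -
    (s%:R * (2 * (k%:R - tau)) + n%:R * tau) ^+ 2 =
    4 * (k%:R - tau) * (n%:R * s1%:R - (k%:R - tau) * s%:R ^+ 2 - tau * n%:R * s%:R) by ring.
  by apply: mulr_ge0 => //; apply: mulr_ge0 => //; exact: ltW.
have zle : z <= n%:R * q.
  have Nq : 0 <= n%:R * q by apply: mulr_ge0 => //; exact: ltW.
  case: (lerP z 0) => hz; first exact: le_trans hz Nq.
  by rewrite -(ler_pXn2r (n := 2)) // ?nnegrE ?ltW.
have -> : n%:R * (- tau + q) = n%:R * q - n%:R * tau by ring.
by rewrite lerBrDr.
Qed.
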